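(* Let $q$ be an odd prime power and $d\ge 2$. Let $V$ be a $(2d+1)$-dimensional vector space over $\mathbb{F}_q$ with basis $z,e_0,f_0,x,y,e_1,f_1,\dots,e_{d-2},f_{d-2}$ and nondegenerate symmetric bilinear form $\beta$ with $V=\langle z\rangle\perp\langle e_0,f_0\rangle\perp\langle x,y\rangle\perp\langle e_1,f_1\rangle\perp\cdots\perp\langle e_{d-2},f_{d-2}\rangle$, $\beta(z,z)=1$, $\beta(e_i,f_i)=1$, $\beta(e_i,e_i)=\beta(f_i,f_i)=0$, and $\langle x,y\rangle$ anisotropic; let $\kappa(v)=\beta(v,v)/2$ and let $\mathcal{Q}(2d,q)$ be the associated parabolic quadric. Let $W=\langle z,e_0,f_0\rangle$, $U=W^\perp$, $B=\{g\oplus 1_U: g\in\Omega(W)\}$ with $\Omega(W)$ the derived subgroup of the orthogonal group of $(W,\kappa|_W)$, let $\tau$ be the linear map with $z\mapsto -z$ fixing all other basis vectors, and $A=\langle B,\tau\rangle$. Then $A$ and $B$ have the same orbits on the points of $\mathcal{Q}(2d,q)$.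
   Context: A point of $\mathcal{Q}(2d,q)$ is a $1$-dimensional subspace of $V$ on which $\kappa$ vanishes. *)

(* Defs.v *)
From HB Require Import structures.
From mathcomp Require Import all_boot all_order all_fingroup all_algebra.
Set Implicit Arguments. Unset Strict Implicit. Unset Printing Implicit Defensive.
Import GRing.Theory.
Local Open Scope ring_scope.

(* V = F^(2d+1), row vectors, basis indexed by 0..2d in the order
   z (0), e_0 (1), f_0 (2), x (3), y (4), e_1 (5), f_1 (6), ..., e_{d-2}, f_{d-2}.
   The Gram matrix of beta: beta(z,z)=1, beta(e_i,f_i)=1, the anisotropic plane
   <x,y> has Gram matrix [[a,b],[b,c]], and all other entries are 0. *)
Definition gram_entry (F : fieldType) (a b c : F) (i j : nat) : F :=
  if (i == 0%N) && (j == 0%N) then 1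
  else if ((i == 1%N) && (j == 2%N)) || ((i == 2%N) && (j == 1%N)) then 1
  else if (i == 3%N) && (j == 3%N) then a
  else if ((i == 3%N) && (j == 4%N)) || ((i == 4%N) && (j == 3%N)) then b
  else if (i == 4%N) && (j == 4%N) then c
  else if [&& (5 <= i)%N, (5 <= j)%N, i != j & ((i - 5)./2 == (j - 5)./2)%N]
       then 1 else 0.

Definition gramV (F : fieldType) (d : nat) (a b c : F) : 'M[F]_((2 * d).+1) :=
  \matrix_(i, j) gram_entry a b c i j.

Definition betaV (F : fieldType) (d : nat) (a b c : F) (u v : 'rV[F]_((2 * d).+1)) : F :=
  (u *m gramV d a b c *m v^T) 0 0.

Definition kappaV (F : fieldType) (d : nat) (a b c : F) (v : 'rV[F]_((2 * d).+1)) : F :=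
  betaV a b c v v / 2.

(* W = <z, e_0, f_0> = first three coordinates; Gram matrix of beta|_W. *)
Definition gramW (F : fieldType) : 'M[F]_3 :=
  \matrix_(i, j) gram_entry 0 0 0 i j.

Definition kappaW (F : fieldType) (w : 'rV[F]_3) : F :=
  (w *m gramW F *m w^T) 0 0 / 2.

Definition OW (F : finFieldType) : {set {'GL_3[F]}} :=
  [set g : {'GL_3[F]} | [forall w : 'rV[F]_3, kappaW (w *m GLval g) == kappaW w]].

Definition OmegaW (F : finFieldType) : {set {'GL_3[F]}} := [~: OW F, OW F]%g.

Definition embed_mx (F : fieldType) (d : nat) (g : 'M[F]_3) : 'M[F]_((2 * d).+1) :=
  \matrix_(i, j) if (i < 3)%N && (j < 3)%N then g (inord i) (inord j)
                 else (i == j :> nat)%:R.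

Definition Bgrp (F : finFieldType) (d : nat) : {set {'GL_((2 * d).+1)[F]}} :=
  [set u : {'GL_((2 * d).+1)[F]} | [exists g in OmegaW F, GLval u == embed_mx d (GLval g)]].

Definition tauV (F : fieldType) (d : nat) : 'M[F]_((2 * d).+1) :=
  \matrix_(i, j) if i == j then (if i == 0 :> nat then -1 else 1) else 0.

Definition Agrp (F : finFieldType) (d : nat) : {set {'GL_((2 * d).+1)[F]}} :=
  (<<Bgrp F d :|: [set u : {'GL_((2 * d).+1)[F]} | GLval u == tauV F d]>>)%g.

(* Main.v *)
Require Import Defs.
From HB Require Import structures.
From mathcomp Require Import all_boot all_order all_fingroup all_algebra.
From mathcomp Require Import cyclic ring.
Import GRing.Theory FinRing.Theory.
Set Implicit Arguments. Unset Strict Implicit.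
Local Open Scope ring_scope.

Lemma two_neq0 (F : finFieldType) : odd #|F| -> (2 : F) != 0.
Proof.
move=> oddF; apply/negP => /eqP h2.
have x1 : (1 : F) \in [set: F] by rewrite inE.
have hd := order_dvdG x1.
have h2g : ((1%R : F) ^+ 2)%g == 1%g.
  by apply/eqP; rewrite zmodXgE zmod1gE; exact: h2.
rewrite -order_dvdn in h2g.
have h1 : #[(1%R:F)]%g != 1%N by rewrite order_eq1 zmod1gE oner_neq0.
have ho : #[(1%R:F)]%g = 2%N.
  have hle := dvdn_leq (isT : (0 < 2)%N) h2g.
  have hgt := order_gt0 (1%R : F).
  by move: hle hgt h1; case: (#[_]%g) => [|[|[|k]]].
rewrite ho cardsT in hd.
by move: hd; rewrite dvdn2 oddF.
Qed.

Section BW.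
Variable F : fieldType.
Implicit Types x y u w : 'rV[F]_3.

Definition bW x y : F := (x *m gramW F *m y^T) 0 0.

Lemma gramW_sym : (gramW F)^T = gramW F.
Proof.
apply/matrixP => i j; rewrite !mxE /gram_entry.
by case: i => [[|[|[|i]]] Hi] //; case: j => [[|[|[|j]]] Hj].
Qed.

Lemma bWC x y : bW x y = bW y x.
Proof.
have h (M : 'M[F]_1) : M 0 0 = M^T 0 0 by rewrite mxE.
by rewrite /bW h !trmx_mul trmxK gramW_sym mulmxA.
Qed.

Lemma bWDl x1 x2 y : bW (x1 + x2) y = bW x1 y + bW x2 y.
Proof. by rewrite /bW !mulmxDl mxE. Qed.
Lemma bWZl a x y : bW (a *: x) y = a * bW x y.
Proof. by rewrite /bW -!scalemxAl mxE. Qed.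
Lemma bWNl x y : bW (- x) y = - bW x y.
Proof. by rewrite -scaleN1r bWZl mulN1r. Qed.
Lemma bWBl x1 x2 y : bW (x1 - x2) y = bW x1 y - bW x2 y.
Proof. by rewrite bWDl bWNl. Qed.
Lemma bWDr x y1 y2 : bW x (y1 + y2) = bW x y1 + bW x y2.
Proof. by rewrite bWC bWDl !(bWC x). Qed.
Lemma bWZr a x y : bW x (a *: y) = a * bW x y.
Proof. by rewrite bWC bWZl bWC. Qed.
Lemma bWBr x y1 y2 : bW x (y1 - y2) = bW x y1 - bW x y2.
Proof. by rewrite bWC bWBl !(bWC x). Qed.

Definition mk3 (a b c : F) : 'rV[F]_3 :=
  \row_(j < 3) (if j == 0 :> nat then a else if j == 1 :> nat then b else c).

Lemma bW_coord x y : bW x y = x 0 0 * y 0 0 + x 0 1 * y 0 2 + x 0 2 * y 0 1.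
Proof.
rewrite /bW !mxE !big_ord_recl big_ord0 !mxE !big_ord_recl !big_ord0 !mxE /=.
rewrite /gram_entry /=.
have e1 : lift ord0 ord0 = 1 :> 'I_3 by apply/val_inj.
have e2 : lift ord0 (lift ord0 ord0) = 2 :> 'I_3 by apply/val_inj.
rewrite e1 e2 !mulr1 !mulr0 !addr0 !add0r; ring.
Qed.

Lemma mk3E a b c : (mk3 a b c) 0 0 = a /\ (mk3 a b c) 0 1 = b /\ (mk3 a b c) 0 2 = c.
Proof. by rewrite !mxE. Qed.

Definition refl y : 'M[F]_3 := 1%:M - (2 / bW y y) *: (gramW F *m y^T *m y).

Lemma reflE x y : x *m refl y = x - (2 * bW x y / bW y y) *: y.
Proof.
rewrite /refl mulmxBr mulmx1 -scalemxAr !mulmxA.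
rewrite (mx11_scalar (x *m gramW F *m y^T)) mul_scalar_mx scalerA.
by rewrite /bW mulrAC.
Qed.

Lemma mx_eq_rows n (A B : 'M[F]_n) : (forall x : 'rV_n, x *m A = x *m B) -> A = B.
Proof. by move=> H; apply/row_matrixP => i; rewrite !rowE. Qed.

Lemma refl_invol y : bW y y != 0 -> refl y *m refl y = 1%:M.
Proof.
move=> hy; apply: mx_eq_rows => x; rewrite mulmxA mulmx1 !reflE.
rewrite bWBl bWZl -addrA -opprD -scalerDl.
have -> : 2 * bW x y / bW y y + 2 * (bW x y - 2 * bW x y / bW y y * bW y y) / bW y y = 0.
  by field.
by rewrite scale0r subr0.
Qed.

Lemma refl_iso x y : bW y y != 0 -> bW (x *m refl y) (x *m refl y) = bW x x.
Proof.
move=> hy; rewrite reflE !bWBl !bWBr !bWZl !bWZr (bWC y x).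
by field.
Qed.

Lemma key_calc u w y z : bW w w = 1 -> bW z z = 1 -> y = w + z ->
  bW w y != 0 -> bW y y != 0 -> bW u w = 0 ->
  u *m refl w *m refl y *m refl w *m refl y = u *m refl z.
Proof.
move=> hww hzz hy hs hyy huw.
have hyy2 : bW y y = 2 * bW w y.
  rewrite hy !bWDl !bWDr hww hzz (bWC z w); ring.
have e1 : u *m refl w = u by rewrite reflE huw mulr0 mul0r scale0r subr0.
rewrite e1.
set x2 := u *m refl y.
have hx2w : bW x2 w = - bW u y.
  rewrite /x2 reflE bWBl bWZl huw (bWC y w) hyy2; field.
  by rewrite hs /=; move: hyy; rewrite hyy2 mulf_eq0 negb_or => /andP[].
have e3 : x2 *m refl w = x2 - (- 2 * bW u y) *: w.
  by rewrite reflE hx2w hww divr1 mulrN mulNr.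
have e4 : w *m refl y = - z.
  rewrite reflE hyy2.
  have -> : 2 * bW w y / (2 * bW w y) = 1 by rewrite divff // -hyy2.
  by rewrite scale1r hy opprD addrA subrr add0r.
have e5 : x2 *m refl y = u by rewrite /x2 -mulmxA refl_invol // mulmx1.
rewrite e3 mulmxBl -scalemxAl e4 e5 reflE hzz divr1.
have -> : bW u y = bW u z by rewrite hy bWDr huw add0r.
by rewrite scalerN opprK mulNr scaleNr.
Qed.

Definition z3 := mk3 1 0 0.

Lemma exists_w u : (2:F) != 0 -> exists w,
  [/\ bW w w = 1, bW u w = 0, bW w (w + z3) != 0 & bW (w + z3) (w + z3) != 0].
Proof.
move=> h2.
have h4 : (4:F) != 0.
  by have := mulf_neq0 h2 h2; rewrite -natrM.
have h1 : (1:F) != 0 by exact: oner_neq0.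
case: (eqVneq (u 0 2) 0) => h02.
  case: (eqVneq (u 0 1) 0) => h01.
    exists (mk3 0 1 (1/2)).
    have [e1 e2 e3 e4] : [/\ bW (mk3 0 1 (1/2)) (mk3 0 1 (1/2)) = 1,
       bW u (mk3 0 1 (1/2)) = 0, bW (mk3 0 1 (1/2)) (mk3 0 1 (1/2) + z3) = 1
       & bW (mk3 0 1 (1/2) + z3) (mk3 0 1 (1/2) + z3) = 2].
      by rewrite /z3 !bW_coord !mxE /= h01 h02; split; field.
    by rewrite e1 e2 e3 e4.
  set w := mk3 1 0 (- u 0 0 / u 0 1).
  exists w.
  have [e1 e2 e3 e4] : [/\ bW w w = 1, bW u w = 0, bW w (w + z3) = 2
       & bW (w + z3) (w + z3) = 4].
    by rewrite /w /z3 !bW_coord !mxE /= h02; split; field.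
  by rewrite e1 e2 e3 e4.
set w := mk3 1 (- u 0 0 / u 0 2) 0.
exists w.
have [e1 e2 e3 e4] : [/\ bW w w = 1, bW u w = 0, bW w (w + z3) = 2
     & bW (w + z3) (w + z3) = 4].
  by rewrite /w /z3 !bW_coord !mxE /=; split; field.
by rewrite e1 e2 e3 e4.
Qed.
End BW.

Section Grp.
Variable F : finFieldType.

Definition Rg (y : 'rV[F]_3) : {'GL_3[F]} := insubd (1%g : {'GL_3[F]}) (refl y).

Lemma RgE y : bW y y != 0 -> GLval (Rg y) = refl y.
Proof.
move=> hy; rewrite /Rg insubdK //.
by have [] := mulmx1_unit (refl_invol hy).
Qed.

Lemma kappaW_bW (x : 'rV[F]_3) : kappaW x = bW x x / 2.
Proof. by []. Qed.

Lemma Rg_OW y : bW y y != 0 -> Rg y \in OW F.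
Proof.
move=> hy; rewrite inE; apply/forallP => x.
by rewrite RgE // !kappaW_bW refl_iso.
Qed.

Lemma Rg_inv y : bW y y != 0 -> ((Rg y)^-1)%g = Rg y.
Proof.
move=> hy; apply/eqP; rewrite eq_invg_mul; apply/eqP/val_inj.
change (GLval (Rg y * Rg y)%g = GLval 1%g).
by rewrite GL_MxE RgE // refl_invol.
Qed.

Lemma key_omega (u : 'rV[F]_3) : (2:F) != 0 ->
  exists2 g, g \in OmegaW F & u *m GLval g = u *m refl (z3 F).
Proof.
move=> h2; have [w [hww huw hwy hyy]] := exists_w u h2.
set y := w + z3 F.
have hzz : bW (z3 F) (z3 F) = 1 by rewrite bW_coord !mxE /=; ring.
have hww' : bW w w != 0 by rewrite hww oner_neq0.
exists [~ Rg w, Rg y]%g.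
  by rewrite /OmegaW; apply: mem_commg; apply: Rg_OW.
rewrite /commg /conjg !Rg_inv //.
rewrite !GL_MxE !RgE // !mulmxA.
exact: key_calc.
Qed.
End Grp.

Section Embed.
Variable F : fieldType.
Variable d : nat.
Hypothesis hd : (1 <= d)%N.
Local Notation n := (2 * d).+1.

Definition lsub (v : 'rV[F]_n) : 'rV[F]_3 := \row_(k < 3) v 0 (inord k).

Lemma n_ge3 : (3 <= n)%N.
Proof. by move: hd; rewrite ltnS; case: d => // k _; rewrite mulnS leq_addr. Qed.

Lemma embedE (M : 'M[F]_3) (v : 'rV[F]_n) (j : 'I_n) :
  (v *m embed_mx d M) 0 j = if (j < 3)%N then (lsub v *m M) 0 (inord j) else v 0 j.
Proof.
rewrite mxE; case: ifP => hj.
  transitivity (\sum_(i < n | (i < 3)%N) v 0 i * M (inord i) (inord j)).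
    rewrite [RHS]big_mkcond; apply: eq_bigr => i _; rewrite mxE hj andbT.
    case: ifP => // hi.
    suff -> : (i == j :> nat) = false by rewrite mulr0.
    by apply/negbTE; apply: contraFN hi => /eqP ->.
  rewrite mxE.
  transitivity (\sum_(k < 3) (fun k : nat => v 0 (inord k) * M (inord k) (inord j)) k).
    rewrite (big_ord_widen n (fun k : nat => v 0 (inord k) * M (inord k) (inord j)) n_ge3).
    by apply: eq_bigr => i _; rewrite inord_val.
  by apply: eq_bigr => k _; rewrite /= inord_val mxE.
rewrite (bigD1 j) //= mxE hj andbF eqxx mulr1 big1 ?addr0 // => i hij.
rewrite mxE hj andbF.
suff -> : (i == j :> nat) = false by rewrite mulr0.
exact: negbTE.
Qed.

Lemma lsubE (v : 'rV[F]_n) (k : 'I_3) : lsub v 0 k = v 0 (inord k).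
Proof. by rewrite mxE. Qed.

Lemma lsub_embed (M : 'M[F]_3) (v : 'rV[F]_n) : lsub (v *m embed_mx d M) = lsub v *m M.
Proof.
apply/rowP => k; rewrite mxE embedE.
have hk : (k < n)%N by apply: leq_trans (ltn_ord k) n_ge3.
by rewrite inordK // ltn_ord inord_val.
Qed.

Lemma embed_tail (M : 'M[F]_3) (v : 'rV[F]_n) (j : 'I_n) : (3 <= j)%N ->
  (v *m embed_mx d M) 0 j = v 0 j.
Proof. by move=> hj; rewrite embedE ltnNge hj. Qed.

Lemma embed_mul (A B : 'M[F]_3) : embed_mx d (A *m B) = embed_mx d A *m embed_mx d B.
Proof.
apply: mx_eq_rows => v; apply/rowP => j; rewrite mulmxA embedE [in RHS]embedE.
by rewrite lsub_embed mulmxA embedE; case: ifP.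
Qed.

Lemma embed_1 : embed_mx d (1%:M : 'M[F]_3) = 1%:M.
Proof.
apply: mx_eq_rows => v; apply/rowP => j; rewrite mulmx1 embedE mulmx1.
case: ifP => // hj; rewrite mxE inordK //; by rewrite inord_val.
Qed.

Lemma tauE (v : 'rV[F]_n) (j : 'I_n) :
  (v *m tauV F d) 0 j = if j == 0 :> nat then - v 0 j else v 0 j.
Proof.
rewrite mxE (bigD1 j) //= mxE eqxx big1 ?addr0.
  by case: ifP => _; rewrite ?mulrN1 ?mulr1.
by move=> i /negbTE hij; rewrite mxE hij mulr0.
Qed.

Lemma tau_embed (v : 'rV[F]_n) (g : 'M[F]_3) :
  lsub v *m g = lsub v *m refl (z3 F) -> v *m embed_mx d g = v *m tauV F d.
Proof.
move=> hg; apply/rowP => j; rewrite embedE tauE; case: ifP => hj.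
  rewrite hg reflE !bW_coord !mxE /=.
  have e0 : (inord 0 : 'I_n) = 0 by apply: val_inj; rewrite /= inordK.
  rewrite !(mulr0, mul0r, addr0, mulr1) divr1 if_same inordK // inord_val e0.
  case: eqP => [hj0|hj0].
    have -> : j = 0 by apply: val_inj.
    by rewrite mulr1; ring.
  by rewrite mulr0 subr0.
case: eqP => // hj0.
by move: hj; rewrite hj0.
Qed.
End Embed.

Section Main.
Variable F : finFieldType.
Variable d : nat.
Hypothesis hd : (1 <= d)%N.
Local Notation n := (2 * d).+1.

Definition EB (g : {'GL_3[F]}) : {'GL_n[F]} :=
  insubd (1%g : {'GL_n[F]}) (embed_mx d (GLval g)).

Lemma EBE g : GLval (EB g) = embed_mx d (GLval g).
Proof.
rewrite /EB insubdK //.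
have h := congr1 GLval (mulgV g); rewrite GL_MxE GL_1E in h.
have h' : embed_mx d (GLval g) *m embed_mx d (GLval (g^-1)%g) = 1%:M.
  by rewrite -embed_mul // h embed_1.
by have [] := mulmx1_unit h'.
Qed.

Lemma Bgrp1 : (1%g : {'GL_n[F]}) \in Bgrp F d.
Proof.
rewrite inE; apply/existsP; exists 1%g; rewrite /OmegaW group1 /=.
apply/eqP; exact: (esym (embed_1 F hd)).
Qed.

Lemma BgrpM (b1 b2 : {'GL_n[F]}) : b1 \in Bgrp F d -> b2 \in Bgrp F d -> (b1 * b2)%g \in Bgrp F d.
Proof.
rewrite !inE => /existsP[h1 /andP[h1O /eqP e1]] /existsP[h2 /andP[h2O /eqP e2]].
apply/existsP; exists (h1 * h2)%g; rewrite /OmegaW groupM // andTb.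
by rewrite GL_MxE GL_MxE e1 e2 embed_mul.
Qed.

Definition Hset : {set {'GL_n[F]}} :=
  [set g : {'GL_n[F]} | [forall x : 'rV[F]_n,
     [exists b in Bgrp F d, x *m GLval g == x *m GLval b]]].

Lemma Hset_group : group_set Hset.
Proof.
apply/group_setP; split.
  rewrite inE; apply/forallP => x; apply/existsP; exists 1%g.
  by rewrite Bgrp1 eqxx.
move=> x y; rewrite !inE => /forallP hx /forallP hy; apply/forallP => v.
have /existsP[b1 /andP[hb1 /eqP e1]] := hx v.
have /existsP[b2 /andP[hb2 /eqP e2]] := hy (v *m GLval b1).
apply/existsP; exists (b1 * b2)%g; rewrite BgrpM // andTb.
by rewrite !GL_MxE !mulmxA e1 e2.
Qed.


Lemma Agrp_sub : (2:F) != 0 -> Agrp F d \subset Hset.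
Proof.
move=> h2; rewrite /Agrp (gen_subG _ (Group Hset_group)) subUset; apply/andP; split.
  apply/subsetP => b hb; rewrite inE; apply/forallP => v; apply/existsP.
  by exists b; rewrite hb eqxx.
apply/subsetP => t; rewrite inE => /eqP ht; rewrite inE; apply/forallP => v.
apply/existsP.
have [g hg e] := key_omega (lsub v) h2.
exists (EB g); apply/andP; split.
  by rewrite inE; apply/existsP; exists g; rewrite hg EBE eqxx.
by rewrite EBE ht (tau_embed hd e).
Qed.
End Main.

Theorem corollary3p6 (F : finFieldType) (q d : nat) (a b c : F) :
  #|F| = q -> odd q -> (2 <= d)%N ->
  (forall s t : F, (s != 0) || (t != 0) ->
     a * s ^+ 2 + 2 * b * s * t + c * t ^+ 2 != 0) ->
  forall v w : 'rV[F]_((2 * d).+1),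
    v != 0 -> kappaV a b c v = 0 -> w != 0 -> kappaV a b c w = 0 ->
    (exists2 g, g \in Agrp F d & (v *m GLval g == w)%MS) <->
    (exists2 g, g \in Bgrp F d & (v *m GLval g == w)%MS).
Proof.
move=> hF hq hd _ v w _ _ _ _.
have h2 : (2:F) != 0 by apply: two_neq0; rewrite hF.
have hd1 : (1 <= d)%N by apply: leq_trans hd.
split.
  move=> [g hg hvw].
  have := subsetP (Agrp_sub hd1 h2) g hg.
  rewrite inE => /forallP /(_ v) /existsP [b' /andP [hb /eqP e]].
  by exists b' => //; rewrite -e.
move=> [g hg hvw]; exists g => //.
by rewrite /Agrp mem_gen // inE hg.
Qed.
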